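(* For any $b,c\in\mathbb C\setminus\{-1,-2,-3,\dots\}$, with $f$ and $h$ as defined in the context, \[f(b,c)=\frac{c+1}{b+1}\cdot\frac{h(b)}{h(c)}.\]
   Context: Let $u_n=(-1)^{s_2(n)}$, where $s_2(n)$ is the sum of the binary digits of the non-negative integer $n$ (Thue–Morse sequence with values $\pm1$). For $b,c\in\mathbb C\setminus\{-1,-2,-3,\dots\}$ define $f(b,c)=\prod_{n=1}^\infty\left(\frac{n+b}{n+c}\right)^{u_n}$ (limit of partial products; this converges for all such $b,c$). Define $h(x)=f\left(\frac x2,\frac{x+1}{2}\right)=\prod_{n=1}^\infty\left(\frac{2n+x}{2n+1+x}\right)^{u_n}$ for $x\in\mathbb C\setminus\{-2,-3,-4,\dots\}$. *)

(* Defs.v *)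
From HB Require Import structures.
From mathcomp Require Import all_boot all_order all_algebra.
From mathcomp Require Import complex.
From mathcomp Require Import all_classical all_reals all_analysis.
Set Implicit Arguments. Unset Strict Implicit. Unset Printing Implicit Defensive.
Import Order.TTheory GRing.Theory Num.Theory.
Import numFieldTopology.Exports numFieldNormedType.Exports.
Local Open Scope ring_scope.
Local Open Scope complex_scope.

HB.instance Definition _ (R : rcfType) := NormedModule.copy R[i] R[i]^o.

(* s_2(n): sum of binary digits of n (bit i of n is (n %/ 2^i) %% 2; bits i >= n vanish). *)
Definition s2 (n : nat) : nat := (\sum_(i < n) ((n %/ 2 ^ i) %% 2))%N.

(* Thue–Morse sequence with values +-1, as an integer exponent. *)
Definition tm (n : nat) : int := (-1) ^+ s2 n.

Definition fpart (R : realType) (b c : R[i]) (N : nat) : R[i] :=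
  \prod_(1 <= n < N.+1) ((n%:R + b) / (n%:R + c)) ^ tm n.

Definition f (R : realType) (b c : R[i]) : R[i] := limn (fpart b c).

Definition h (R : realType) (x : R[i]) : R[i] := f (x / 2) ((x + 1) / 2).

Definition not_negint (R : realType) (x : R[i]) : Prop :=
  forall k : nat, x <> - (k.+1)%:R.

(* Main.v *)
Require Import Defs.
From HB Require Import structures.
From mathcomp Require Import all_boot all_order all_algebra.
From mathcomp Require Import complex.
From mathcomp Require Import all_classical all_reals all_analysis.
Import Order.TTheory GRing.Theory Num.Theory.
Local Open Scope ring_scope.
From mathcomp Require Import ring lra zify.
Import numFieldTopology.Exports numFieldNormedType.Exports.
Local Open Scope complex_scope.
Local Open Scope classical_set_scope.
Section S.
Context {R : realType}.
Local Notation C := R[i].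
Definition nc (z : C) : R := ComplexField.Normc.normc z.
Lemma ncE (z : C) : `|z| = (nc z)%:C. Proof. by []. Qed.
Lemma nc_ge0 z : 0 <= nc z.
Proof. by case: z => a b; rewrite /nc /= sqrtr_ge0. Qed.
Lemma nc_eq0 z : (nc z == 0) = (z == 0).
Proof. apply/eqP/eqP => [/ComplexField.Normc.eq0_normc // | ->]; exact: ComplexField.Normc.normc0. Qed.
Lemma ncD x y : nc (x + y) <= nc x + nc y.
Proof. exact: le_normcD. Qed.
Lemma ncM x y : nc (x * y) = nc x * nc y.
Proof. exact: ComplexField.Normc.normcM. Qed.
Lemma ncV x : nc (x^-1) = (nc x)^-1.
Proof. exact: ComplexField.Normc.normcV. Qed.
Lemma ncN x : nc (- x) = nc x.
Proof. exact: normcN. Qed.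
Lemma ncB x y : nc (x - y) = nc (y - x).
Proof. by rewrite -ncN opprB. Qed.
Lemma nc_nat n : nc n%:R = n%:R.
Proof. apply: complexI; rewrite -ncE normr_nat; by rewrite rmorph_nat. Qed.
Lemma nc1 : nc 1 = 1.
Proof. exact: (nc_nat 1). Qed.
Lemma ncDB x y : nc x - nc y <= nc (x + y).
Proof. have := ncD (x + y) (- y); by rewrite ncN addrK lerBlDr. Qed.
Lemma nc_Re (a b : R) : `|a| <= nc (a +i* b).
Proof.
rewrite /nc /= -sqrtr_sqr ler_sqrt; last by rewrite addr_ge0 ?sqr_ge0.
by rewrite lerDl sqr_ge0.
Qed.
Lemma nc_Im (a b : R) : `|b| <= nc (a +i* b).
Proof.
rewrite /nc /= -sqrtr_sqr ler_sqrt; last by rewrite addr_ge0 ?sqr_ge0.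
by rewrite lerDr sqr_ge0.
Qed.
Lemma nc_ReIm (a b : R) : nc (a +i* b) <= `|a| + `|b|.
Proof.
rewrite /nc /= -(ger0_norm (addr_ge0 (normr_ge0 a) (normr_ge0 b))).
rewrite -sqrtr_sqr ler_sqrt ?sqr_ge0 //.
rewrite sqrrD !real_normK ?num_real //.
have := mulr_ge0 (normr_ge0 a) (normr_ge0 b); nra.
Qed.

Definition cv (u : nat -> C) (l : C) :=
  forall e : R, 0 < e -> exists N, forall n, (N <= n)%N -> nc (u n - l) < e.

Lemma cv_cvg u l : cv u l -> u @ \oo --> l.
Proof.
move=> H; apply/cvgrPdist_lt => -[a b]; rewrite ltcE /= => /andP[/eqP -> a0].
have [N HN] := H a a0; exists N => // n /= /HN.
by rewrite ncE -ltcR ncB.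
Qed.

Lemma cvg_cv u l : u @ \oo --> l -> cv u l.
Proof.
move/cvgrPdist_lt => H e e0.
have e0' : 0 < e%:C by rewrite ltcR.
have [N _ HN] := H _ e0'.
exists N => n /HN /=; by rewrite ncE ltcR ncB.
Qed.

Lemma cv_lim u l : cv u l -> limn u = l.
Proof. move=> /cv_cvg; apply: cvg_lim; exact: norm_hausdorff. Qed.

End S.
Section S2.
Context {R : realType}.
Local Notation C := R[i].


Lemma real_cauchy (v : nat -> R) :
  (forall e, 0 < e -> exists N, forall n m, (N <= n)%N -> (N <= m)%N -> `|v n - v m| < e) ->
  exists l, forall e, 0 < e -> exists N, forall n, (N <= n)%N -> `|v n - l| < e.
Proof.
move=> Hv.
have : cvg (v @ \oo).
  apply: cauchy_cvg; apply: cauchy_exP => e e0.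
  have [N HN] := Hv e e0; exists (v N); exists N => // m Hm.
  exact: HN.
move/cvg_ex => [l /cvgrPdist_lt Hl]; exists l => e e0.
have [N _ HN] := Hl e e0; exists N => n /HN /=; by rewrite distrC.
Qed.

Lemma cauchy_cv (u : nat -> C) :
  (forall e, 0 < e -> exists N, forall n m, (N <= n)%N -> (N <= m)%N -> nc (u n - u m) < e) ->
  exists l, cv u l.
Proof.
move=> H.
have [lr Hr] : exists l, forall e, 0 < e -> exists N, forall n, (N <= n)%N -> `|complex.Re (u n) - l| < e.
  apply: real_cauchy => e e0; have [N HN] := H e e0; exists N => n m Hn Hm.
  apply: le_lt_trans (HN n m Hn Hm).
  by case: (u n) (u m) => a b [c d]; apply: nc_Re.
have [li Hi] : exists l, forall e, 0 < e -> exists N, forall n, (N <= n)%N -> `|complex.Im (u n) - l| < e.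
  apply: real_cauchy => e e0; have [N HN] := H e e0; exists N => n m Hn Hm.
  apply: le_lt_trans (HN n m Hn Hm).
  by case: (u n) (u m) => a b [c d]; apply: nc_Im.
exists (lr +i* li) => e e0.
have e2 : 0 < e / 2 by rewrite divr_gt0.
have [N1 H1] := Hr _ e2; have [N2 H2] := Hi _ e2.
exists (maxn N1 N2) => n; rewrite geq_max => /andP[/H1 h1 /H2 h2].
apply: le_lt_trans (_ : `|complex.Re (u n) - lr| + `|complex.Im (u n) - li| < e).
  by move: h1 h2; case: (u n) => a b /= _ _; apply: nc_ReIm.
lra.
Qed.

Lemma cv_mul (u v : nat -> C) (a b : C) : cv u a -> cv v b -> cv (fun n => u n * v n) (a * b).
Proof.
move=> Hu Hv e e0.
set A := nc a + 1; set B := nc b + 1.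
have A0 : 0 < A by rewrite /A; have := nc_ge0 a; lra.
have B0 : 0 < B by rewrite /B; have := nc_ge0 b; lra.
have e1p : 0 < e / (2 * B) by rewrite divr_gt0 // mulr_gt0.
have e2p : 0 < Num.min 1 (e / (2 * A)) by rewrite lt_min ltr01 divr_gt0 // mulr_gt0.
have [N1 h1] := Hu _ e1p; have [N2 h2] := Hv _ e2p.
exists (maxn N1 N2) => n; rewrite geq_max => /andP[/h1 k1 /h2].
rewrite lt_min => /andP[k2 k3].
have -> : u n * v n - a * b = (u n - a) * v n + a * (v n - b) by ring.
apply: le_lt_trans (ncD _ _) _; rewrite !ncM.
have vB : nc (v n) <= B.
  have := ncD b (v n - b); rewrite addrC subrK /B; lra.
have t1 : nc (u n - a) * nc (v n) <= e / (2 * B) * B.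
  by apply: ler_pM => //; [exact: nc_ge0 | exact: nc_ge0 | exact: ltW].
have t2 : nc a * nc (v n - b) <= nc a * (e / (2 * A)).
  by apply: ler_wpM2l; [exact: nc_ge0 | exact: ltW].
have t3 : e / (2 * B) * B = e / 2 by field; rewrite gt_eqF.
have t4 : nc a * (e / (2 * A)) < e / 2.
  have -> : e / 2 = A * (e / (2 * A)) by field; rewrite gt_eqF.
  by rewrite ltr_pM2r ?divr_gt0 ?mulr_gt0 // /A ltrDl.
lra.
Qed.

Lemma cv_inv (u : nat -> C) (a : C) : a != 0 -> cv u a -> cv (fun n => (u n)^-1) a^-1.
Proof.
move=> a0 Hu e e0.
have na0 : 0 < nc a by rewrite lt_def nc_eq0 a0 nc_ge0.
have ep : 0 < Num.min (nc a / 2) (e * (nc a * nc a) / 2).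
  by rewrite lt_min !divr_gt0 ?mulr_gt0.
have [N hN] := Hu _ ep; exists N => n /hN; rewrite lt_min => /andP[k1 k2].
have nu : nc a / 2 < nc (u n).
  have := ncD (u n) (a - u n); rewrite addrC subrK ncB; lra.
have u0 : u n != 0 by rewrite -nc_eq0 gt_eqF //; apply: lt_trans nu; rewrite divr_gt0.
have -> : (u n)^-1 - a^-1 = (a - u n) / (u n * a) by field; rewrite u0 a0.
rewrite ncM ncV ncM ltr_pdivrMr ?mulr_gt0 //; last by apply: lt_trans nu; rewrite divr_gt0.
rewrite ncB; apply: (lt_trans k2).
have : nc a * nc a / 2 < nc (u n) * nc a.
  have -> : nc a * nc a / 2 = (nc a / 2) * nc a by field.
  by rewrite ltr_pM2r.
move=> h; have : e * (nc a * nc a / 2) < e * (nc (u n) * nc a) by rewrite ltr_pM2l.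
by rewrite !mulrA.
Qed.

Lemma cv_cst (a : C) : cv (fun _ => a) a.
Proof. move=> e e0; exists 0%N => n _; by rewrite subrr /nc ComplexField.Normc.normc0. Qed.

Lemma cv_ext (u v : nat -> C) (l : C) : (forall n, u n = v n) -> cv u l -> cv v l.
Proof. by move=> /funext ->. Qed.

Lemma cv_shift (u : nat -> C) (l : C) : cv u l -> cv (fun n => u n.+1) l.
Proof. move=> H e e0; have [N HN] := H e e0; exists N => n Hn; apply: HN; lia. Qed.

Lemma cv_evenodd (u : nat -> C) (l : C) : cv (fun k => u k.*2.+1) l -> cv (fun k => u k.*2.+2) l -> cv u l.
Proof.
move=> H1 H2 e e0; have [N1 h1] := H1 e e0; have [N2 h2] := H2 e e0.
exists (maxn N1 N2).*2.+1 => n Hn.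
have := odd_double_half n.-1; case: (odd n.-1) => /= Hk.
- have -> : n = (n.-1./2).*2.+2 by lia.
  apply: h2; lia.
- have -> : n = (n.-1./2).*2.+1 by lia.
  apply: h1; lia.
Qed.

End S2.
Section S3.
Context {R : realType}.
Local Notation C := R[i].

Lemma nc0 : nc (0 : C) = 0.
Proof. exact: ComplexField.Normc.normc0. Qed.

Lemma prod_bound (a : nat -> C) n m : (n <= m)%N ->
  nc (\prod_(n <= k < m) a k - 1) <= \prod_(n <= k < m) (1 + nc (a k - 1)) - 1.
Proof.
elim: m => [|m IH].
  by rewrite leqn0 => /eqP ->; rewrite !big_geq // !subrr nc0.
rewrite leq_eqVlt => /orP[/eqP ->|]; first by rewrite !big_geq // !subrr nc0.
rewrite ltnS => hnm; rewrite !big_nat_recr //=.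
set Q := \prod_(n <= k < m) a k; set T := \prod_(n <= k < m) (1 + nc (a k - 1)).
have IH' : nc (Q - 1) <= T - 1 := IH hnm.
have -> : Q * a m - 1 = (Q - 1) * a m + (a m - 1) by ring.
apply: le_trans (ncD _ _) _; rewrite ncM.
have ha : nc (a m) <= 1 + nc (a m - 1).
  by have := ncD 1 (a m - 1); rewrite addrC subrK nc1.
have t1 : nc (Q - 1) * nc (a m) <= (T - 1) * (1 + nc (a m - 1)).
  by apply: ler_pM => //; apply: nc_ge0.
lra.
Qed.

Lemma prodT_bound (t : nat -> R) n m : (forall k, 0 <= t k) -> (n <= m)%N ->
  1 <= \prod_(n <= k < m) (1 + t k) /\
  \prod_(n <= k < m) (1 + t k) - 1 <= (\sum_(n <= k < m) t k) * \prod_(n <= k < m) (1 + t k).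
Proof.
move=> t0; elim: m => [|m IH].
  by rewrite leqn0 => /eqP ->; rewrite !big_geq // subrr mul0r.
rewrite leq_eqVlt => /orP[/eqP ->|]; first by rewrite !big_geq // subrr mul0r.
rewrite ltnS => hnm; rewrite !big_nat_recr //=.
have [h1 h2] := IH hnm.
move: h1 h2; set X := \prod_(n <= k < m) (1 + t k); set S := \sum_(n <= k < m) t k.
move=> h1 h2.
have S0 : 0 <= S by apply: sumr_ge0 => k _.
have tm0 := t0 m.
have hX1 : 1 <= X * (1 + t m).
  by rewrite mulrDr mulr1; have := mulr_ge0 (le_trans ler01 h1) tm0; lra.
split => //.
have h3 : (X - 1) * (1 + t m) <= S * X * (1 + t m) by apply: ler_wpM2r => //; lra.
have h4 : t m * 1 <= t m * (X * (1 + t m)) by apply: ler_wpM2l => //; rewrite mulr1.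
nra.
Qed.

Lemma prod_small (t : nat -> R) n m : (forall k, 0 <= t k) -> (n <= m)%N ->
  \sum_(n <= k < m) t k <= 1/4 ->
  \prod_(n <= k < m) (1 + t k) - 1 <= 2 * \sum_(n <= k < m) t k /\
  \prod_(n <= k < m) (1 + t k) <= 2.
Proof.
move=> t0 hnm hs; have [h1 h2] := @prodT_bound t n m t0 hnm.
have S0 : 0 <= \sum_(n <= k < m) t k by apply: sumr_ge0 => k _.
move: h1 h2 hs S0.
set X := \prod_(n <= k < m) (1 + t k); set S := \sum_(n <= k < m) t k.
move=> h1 h2 hs S0.
have hX : X <= 2 by nra.
split => //; nra.
Qed.

Lemma prod_cv (a : nat -> C) : (forall k, a k != 0) ->
  (forall e, 0 < e -> exists N, forall n m, (N <= n)%N -> (n <= m)%N ->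
     \sum_(n <= k < m) nc (a k - 1) <= e) ->
  exists l, l != 0 /\ cv (fun N => \prod_(0 <= k < N) a k) l.
Proof.
move=> a0 Ht.
have t0 : forall k, 0 <= nc (a k - 1) by move=> k; exact: nc_ge0.
have q4 : (0 : R) < 1/4 by lra.
have [N0 hN0] := Ht _ q4.
have Q1 : forall n m, (N0 <= n)%N -> (n <= m)%N ->
    nc (\prod_(n <= k < m) a k - 1) <= 2 * \sum_(n <= k < m) nc (a k - 1) /\
    2 * \sum_(n <= k < m) nc (a k - 1) <= 1/2.
  move=> n m hn hnm; have hs := hN0 n m hn hnm.
  have [h1 h2] := @prod_small (fun k => nc (a k - 1)) n m t0 hnm hs; split; last lra.
  exact: le_trans (@prod_bound a n m hnm) h1.
have Psplit : forall n m, (n <= m)%N ->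
    \prod_(0 <= k < m) a k = \prod_(0 <= k < n) a k * \prod_(n <= k < m) a k.
  by move=> n m h; rewrite -big_cat_nat.
set p0 := nc (\prod_(0 <= k < N0) a k).
have p0pos : 0 < p0.
  rewrite lt_def nc_eq0 nc_ge0 andbT prodf_seq_neq0.
  by apply/allP => k _; apply: a0.
have Pb : forall n, (N0 <= n)%N ->
    p0 / 2 <= nc (\prod_(0 <= k < n) a k) /\ nc (\prod_(0 <= k < n) a k) <= 3/2 * p0.
  move=> n hn; rewrite (Psplit N0 n hn) ncM -/p0.
  have [q1 q2] := Q1 N0 n (leqnn _) hn.
  move: q1 q2; set Q := \prod_(N0 <= k < n) a k => q1 q2.
  have u1 : nc Q <= nc (Q - 1) + 1 by have := ncD (Q - 1) 1; rewrite subrK nc1.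
  have u2 : 1 - nc (Q - 1) <= nc Q.
    by have := ncDB 1 (Q - 1); rewrite nc1 (addrC 1 (Q - 1)) subrK.
  have := nc_ge0 (Q - 1); have := nc_ge0 Q.
  split; nra.
have [l Hl] : exists l, cv (fun N => \prod_(0 <= k < N) a k) l.
  apply: cauchy_cv => e e0.
  have w0 : 0 < e / (4 * p0) by rewrite divr_gt0 // mulr_gt0.
  have [N1 h1] := Ht _ w0.
  exists (maxn N0 N1) => n m.
  wlog: n m / (n <= m)%N.
    move=> W hn hm; case: (leqP n m) => h; first exact: W.
    rewrite ncB; apply: W => //; exact: ltnW.
  rewrite !geq_max => hnm /andP[hn0 hn1] _.
  rewrite ncB (Psplit n m hnm).
  set P := \prod_(0 <= k < n) a k; set Q := \prod_(n <= k < m) a k.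
  have -> : P * Q - P = P * (Q - 1) by ring.
  rewrite ncM.
  have [_ pb] := Pb n hn0.
  have [q1 _] := Q1 n m hn0 hnm.
  have s1 := h1 n m hn1 hnm.
  have k1 : nc P * nc (Q - 1) <= (3/2 * p0) * (2 * (e / (4 * p0))).
    apply: ler_pM; [exact: nc_ge0 | exact: nc_ge0 | exact: pb |].
    apply: le_trans q1 _; lra.
  have k2 : (3/2 * p0) * (2 * (e / (4 * p0))) = 3/4 * e by field; rewrite gt_eqF.
  lra.
exists l; split => //.
have p4 : 0 < p0 / 4 by rewrite divr_gt0.
have [N2 h2] := Hl _ p4.
have hn : (N0 <= maxn N0 N2)%N by rewrite leq_maxl.
have [pb _] := Pb _ hn.
have := h2 (maxn N0 N2) (leq_maxr _ _).
set P := \prod_(0 <= k < maxn N0 N2) a k => k1.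
have k2 : nc P <= nc l + nc (P - l) by have := ncD l (P - l); rewrite addrC subrK.
rewrite -nc_eq0 gt_eqF //; lra.
Qed.

Lemma tel n m : (0 < n)%N -> (n <= m)%N ->
  \sum_(n <= k < m) ((k%:R : R) * (k%:R + 1))^-1 = n%:R^-1 - m%:R^-1.
Proof.
move=> n0; elim: m => [|m IH]; first by rewrite leqn0 => /eqP h; rewrite h in n0.
rewrite leq_eqVlt => /orP[/eqP ->|]; first by rewrite big_geq // subrr.
rewrite ltnS => hnm; rewrite big_nat_recr //= IH // -natr1.
have m0 : (m%:R : R) != 0 by rewrite pnatr_eq0 -lt0n (leq_trans n0).
have m1 : (m%:R + 1 : R) != 0 by rewrite natr1 pnatr_eq0.
have n0' : (n%:R : R) != 0 by rewrite pnatr_eq0 -lt0n.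
field; by rewrite m0 m1 n0'.
Qed.

Lemma tail_bound (t : nat -> R) (K : nat) (c : R) : (0 < K)%N -> 0 <= c ->
  (forall k, (K <= k)%N -> t k <= c / (k%:R * (k%:R + 1))) ->
  forall e, 0 < e -> exists N, forall n m, (N <= n)%N -> (n <= m)%N ->
    \sum_(n <= k < m) t k <= e.
Proof.
move=> K0 c0 Hb e e0.
exists (maxn K (Num.truncn (c / e)).+1) => n m; rewrite geq_max => /andP[hK hT] hnm.
have n0 : (0 < n)%N by apply: leq_trans hK.
apply: le_trans (_ : \sum_(n <= k < m) c / (k%:R * (k%:R + 1)) <= e).
  apply: ler_sum_nat => k /andP[hk _]; apply: Hb; exact: leq_trans hk.
rewrite -mulr_sumr tel //.
have nR : (0 : R) < n%:R by rewrite ltr0n.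
have mR : (0 : R) <= m%:R^-1 by rewrite invr_ge0 ler0n.
have h1 : c * (n%:R^-1 - m%:R^-1) <= c * n%:R^-1.
  by apply: ler_wpM2l => //; lra.
apply: le_trans h1 _.
have h2 : c / e < n%:R.
  apply: lt_le_trans (truncnS_gt _) _; by rewrite ler_nat.
rewrite ltr_pdivrMr // in h2.
rewrite ler_pdivrMr // mulrC; exact: ltW.
Qed.
End S3.
Lemma s2_ext n M : (n <= M)%N -> s2 n = (\sum_(0 <= i < M) (n %/ 2 ^ i %% 2))%N.
Proof.
move=> h; rewrite /s2 -(big_mkord xpredT (fun i => (n %/ 2 ^ i %% 2)%N)) [in RHS](@big_cat_nat _ _ _ n) //=.
rewrite [X in _ = (_ + X)%N]big_nat_cond [X in _ = (_ + X)%N]big1 ?addn0 //.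
move=> i /andP[/andP[hi _] _].
rewrite divn_small ?mod0n //.
apply: leq_trans (ltn_expl n (isT : (1 < 2)%N)) _.
by rewrite leq_pexp2l.
Qed.

Lemma s2_double n : s2 n.*2 = s2 n.
Proof.
rewrite (@s2_ext _ (n.*2).+1) // big_nat_recl //= expn0 divn1 modn2 odd_double /=.
under eq_bigr => i _ do rewrite expnS divnMA divn2 doubleK.
by rewrite add0n -s2_ext // -addnn leq_addr.
Qed.

Lemma s2_doubleS n : s2 n.*2.+1 = (s2 n).+1.
Proof.
rewrite (@s2_ext _ (n.*2.+1).+1) // big_nat_recl //= expn0 divn1 modn2 /= odd_double /=.
have e : (n.*2.+1)./2 = n by rewrite /= uphalf_double.
under eq_bigr => i _ do rewrite expnS divnMA divn2 e.
by rewrite add1n -s2_ext // -addnn -addnS leq_addr.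
Qed.

Lemma tm_double n : tm n.*2 = tm n.
Proof. by rewrite /tm s2_double. Qed.

Lemma tm_doubleS n : tm n.*2.+1 = - tm n.
Proof. by rewrite /tm s2_doubleS exprS mulN1r. Qed.

Lemma tm1 : tm 1 = -1.
Proof. by rewrite (tm_doubleS 0) /tm /s2 big_ord0. Qed.

Lemma tm_pm n : tm n = 1 \/ tm n = -1.
Proof. by rewrite /tm -signr_odd; case: odd; [right|left]. Qed.

Section S4.
Context {R : realType}.
Local Notation C := R[i].

Definition Tt (x : C) (k : nat) : C :=
  (((k.*2)%:R + x) / ((k.*2)%:R + (x + 1))) ^ tm k.
Definition G (x : C) (M : nat) : C := \prod_(1 <= k < M.+1) Tt x k.
Definition Fb (b c : C) (n : nat) : C := ((n%:R + b) / (n%:R + c)) ^ tm n.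
Definition pa (x : C) (i : nat) : C :=
  if i is i'.+1 then Tt x i.*2 * Tt x i.*2.+1 else Tt x 1.

Lemma fpart_h (x : C) N : fpart (x / 2) ((x + 1) / 2) N = G x N.
Proof.
apply: eq_bigr => k _; rewrite /Tt; congr (_ ^ _).
have two : (2 : C) != 0 by rewrite pnatr_eq0.
have E1 : k%:R + x / 2 = ((k.*2)%:R + x) / 2.
  by rewrite -muln2 natrM; field.
have E2 : k%:R + (x + 1) / 2 = ((k.*2)%:R + (x + 1)) / 2.
  by rewrite -muln2 natrM; field.
by rewrite E1 E2 invf_div mulrA divfK.
Qed.

Lemma key_pair (y b c : C) (u : int) : u = 1 \/ u = -1 ->
  ((y + b) / (y + c)) ^ u * ((y + (b + 1)) / (y + (c + 1))) ^ (- u) =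
  ((y + b) / (y + (b + 1))) ^ u / ((y + c) / (y + (c + 1))) ^ u.
Proof.
case=> ->; rewrite ?opprK ?expr1z ?exprN1 !invf_div; ring.
Qed.

Lemma fpart_odd (b c : C) M : fpart b c M.*2.+1 = (c + 1) / (b + 1) * (G b M / G c M).
Proof.
elim: M => [|M IH].
  rewrite /fpart /G big_nat1 !big_geq // tm1 exprN1 invf_div invr1 !mulr1.
  by rewrite (addrC c) (addrC b).
rewrite /fpart doubleS big_nat_recr // big_nat_recr // -/(fpart b c M.*2.+1) IH.
rewrite -/(Fb b c M.*2.+2) -/(Fb b c M.*2.+3).
rewrite /G (@big_nat_recr _ _ _ M.+1) // (@big_nat_recr _ _ _ M.+1) // -/(G b M) -/(G c M).
have k : Fb b c M.*2.+2 * Fb b c M.*2.+3 = Tt b M.+1 / Tt c M.+1.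
  rewrite /Fb /Tt -doubleS tm_double tm_doubleS -[((M.+1).*2.+1)%:R]natr1.
  rewrite -(addrA ((M.+1).*2)%:R 1 b) -(addrA ((M.+1).*2)%:R 1 c) (addrC 1 b) (addrC 1 c).
  exact: key_pair (tm_pm _).
rewrite /= -(mulrA _ (Fb b c M.*2.+2)) k invfM.
ring.
Qed.

Lemma fpart_even (b c : C) M : fpart b c M.*2.+2 = fpart b c M.*2.+1 * Fb b c M.*2.+2.
Proof. by rewrite /fpart big_nat_recr. Qed.

Lemma G_pair (x : C) j : G x j.*2.+1 = \prod_(0 <= i < j.+1) pa x i.
Proof.
elim: j => [|j IH]; first by rewrite /G !big_nat1.
by rewrite big_nat_recr // -IH /G doubleS big_nat_recr // big_nat_recr // /= -mulrA doubleS.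
Qed.

Lemma G_even (x : C) j : G x j.*2.+2 = G x j.*2.+1 * Tt x j.*2.+2.
Proof. by rewrite /G big_nat_recr. Qed.

End S4.
Section S5.
Context {R : realType}.
Local Notation C := R[i].

Lemma nz (x : C) n : not_negint x -> (0 < n)%N -> n%:R + x != 0.
Proof.
move=> hx n0; apply/eqP => h; apply: (hx n.-1); rewrite prednK //.
by rewrite -[x](addKr n%:R) h addr0.
Qed.

Lemma nc_lower (x : C) n : n%:R - nc x <= nc (n%:R + x).
Proof. by have := ncDB n%:R x; rewrite nc_nat. Qed.

Lemma ratio_basic (b c : C) (phi : nat -> nat) : (forall n, (n <= phi n)%N) ->
  cv (fun n => ((phi n)%:R + b) / ((phi n)%:R + c)) 1.
Proof.
move=> hphi e e0.
set D := nc (b - c).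
have D0 : 0 <= D := nc_ge0 _.
exists (Num.truncn (nc c + D / e)).+1 => n hn.
have h1 : nc c + D / e < (phi n)%:R.
  apply: lt_le_trans (truncnS_gt _) _; rewrite ler_nat; exact: leq_trans hn (hphi n).
have De : 0 <= D / e by rewrite divr_ge0 // ltW.
have h2 : D / e < nc ((phi n)%:R + c) by have := nc_lower c (phi n); lra.
have pc : 0 < nc ((phi n)%:R + c) by lra.
have pc0 : (phi n)%:R + c != 0 by rewrite -nc_eq0 gt_eqF.
have -> : ((phi n)%:R + b) / ((phi n)%:R + c) - 1 = (b - c) / ((phi n)%:R + c).
  by field.
rewrite ncM ncV -/D ltr_pdivrMr //.
by move: h2; rewrite ltr_pdivrMr // mulrC.
Qed.

Lemma ratio_cv (b c : C) (phi : nat -> nat) (s : nat -> int) :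
  (forall n, (n <= phi n)%N) -> (forall n, s n = 1 \/ s n = -1) ->
  cv (fun n => (((phi n)%:R + b) / ((phi n)%:R + c)) ^ (s n)) 1.
Proof.
move=> hphi hs e e0.
have [N1 h1] := ratio_basic b c phi hphi e e0.
have [N2 h2] := ratio_basic c b phi hphi e e0.
exists (maxn N1 N2) => n; rewrite geq_max => /andP[/h1 k1 /h2 k2].
by case: (hs n) => ->; rewrite ?expr1z ?exprN1 ?invf_div.
Qed.

Lemma natr2 (m : nat) : (m.+2)%:R = m%:R + 2 :> C.
Proof. by rewrite -addn2 natrD. Qed.

Lemma Tt_neq0 (x : C) k : not_negint x -> (0 < k)%N -> Tt x k != 0.
Proof.
move=> hx k0.
have a1 : (k.*2)%:R + x != 0 by apply: nz => //; rewrite double_gt0.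
have a2 : (k.*2)%:R + (x + 1) != 0.
  have -> : (k.*2)%:R + (x + 1) = (k.*2.+1)%:R + x.
    by rewrite -[(k.*2.+1)%:R]natr1; ring.
  exact: nz.
have r0 : ((k.*2)%:R + x) / ((k.*2)%:R + (x + 1)) != 0 by rewrite mulf_neq0 ?invr_neq0.
by rewrite /Tt; case: (tm_pm k) => ->; rewrite ?expr1z ?exprN1 ?invr_neq0.
Qed.

Lemma pa_neq0 (x : C) i : not_negint x -> pa x i != 0.
Proof.
move=> hx; case: i => [|i] /=; first exact: Tt_neq0.
by rewrite mulf_neq0 // Tt_neq0 // ?double_gt0.
Qed.

Lemma pa_alg (y : C) (u : int) : u = 1 \/ u = -1 ->
  y != 0 -> y + 1 != 0 -> y + 2 != 0 -> y + 3 != 0 ->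
  (y / (y + 1)) ^ u * ((y + 2) / (y + 3)) ^ (- u) - 1 =
  if u == 1 then - 2 / ((y + 1) * (y + 2)) else 2 / (y * (y + 3)).
Proof.
move=> hu h0 h1 h2 h3; case: hu => -> /=; rewrite ?opprK ?expr1z ?exprN1 /=.
  by field; rewrite h1 h2 h3.
by field; rewrite h0 h1 h3.
Qed.

Lemma pa_bound (x : C) k : not_negint x -> nc x + 2 <= k.+1%:R ->
  nc (pa x k.+1 - 1) <= 2 / (k.+1%:R * (k.+1%:R + 1)).
Proof.
move=> hx hk.
have Tpa : pa x k.+1 = ((((k.+1).*2.*2)%:R + x) / (((k.+1).*2.*2)%:R + x + 1)) ^ tm k.+1 *
    ((((k.+1).*2.*2)%:R + x + 2) / (((k.+1).*2.*2)%:R + x + 3)) ^ (- tm k.+1).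
  transitivity (Tt x (k.+1).*2 * Tt x (k.+1).*2.+1); first by [].
  rewrite /Tt tm_double tm_doubleS (doubleS ((k.+1).*2)) (natr2 ((k.+1).*2.*2)).
  congr (_ ^ _ * _ ^ _); congr (_ / _); ring.
set K := k.+1 in hk Tpa *.
set Z := K.*2.*2 in Tpa *.
set y := Z%:R + x in Tpa *.
have ZE : (Z%:R : R) = 4 * K%:R by rewrite /Z -!muln2 !natrM; ring.
have low : forall w : C, Z%:R - nc x - nc w <= nc (y + w).
  move=> w; have := ncDB (Z%:R) (x + w); have := ncD x w.
  rewrite (nc_nat Z) /y -(addrA (Z%:R) x w); lra.
have K1 : (1 : R) <= K%:R by rewrite ler1n.
have b0 : K%:R + 1 <= nc y by have := low 0; rewrite nc0 addr0; lra.
have b1 : K%:R + 1 <= nc (y + 1) by have := low 1; rewrite nc1; lra.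
have b2 : K%:R + 1 <= nc (y + 2) by have := low 2; rewrite (nc_nat 2); lra.
have b3 : K%:R + 1 <= nc (y + 3) by have := low 3; rewrite (nc_nat 3); lra.
have nz0 : forall w : C, K%:R + 1 <= nc w -> w != 0.
  by move=> w hw; rewrite -nc_eq0 gt_eqF //; apply: (lt_le_trans _ hw); lra.
rewrite Tpa pa_alg ?nz0 //; last exact: tm_pm.
have KK : (0 : R) < K%:R * (K%:R + 1) by apply: mulr_gt0; lra.
have gen : forall A B : C, K%:R + 1 <= nc A -> K%:R + 1 <= nc B ->
    nc (2 / (A * B)) <= 2 / (K%:R * (K%:R + 1)).
  move=> A B hA hB; rewrite ncM ncV ncM (nc_nat 2).
  apply: ler_wpM2l; first by [].
  rewrite lef_pV2 ?posrE //; last by apply: mulr_gt0; lra.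
  apply: ler_pM; lra.
case: (_ == _); last exact: gen.
by rewrite mulNr ncN; apply: gen.
Qed.

Lemma G_cv (x : C) : not_negint x -> exists L, L != 0 /\ cv (G x) L.
Proof.
move=> hx.
have [L [L0 HL]] : exists l, l != 0 /\ cv (fun N => \prod_(0 <= k < N) pa x k) l.
  apply: prod_cv; first by move=> k; apply: pa_neq0.
  apply: (@tail_bound R (fun k => nc (pa x k - 1)) (Num.truncn (nc x + 2)).+1 2) => // k hk.
  case: k hk => [//|k] hk.
  apply: pa_bound => //.
  apply: ltW; apply: lt_le_trans (truncnS_gt _) _; by rewrite ler_nat.
exists L; split => //.
apply: (@cv_evenodd _ (G x)).
  apply: (@cv_ext _ _ _ _ _ (@cv_shift _ _ _ HL)) => j; by rewrite G_pair.
have H2 : cv (fun j => Tt x j.*2.+2) 1.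
  rewrite /Tt; apply: (ratio_cv x (x + 1) (fun j => (j.*2.+2).*2) (fun j => tm j.*2.+2)).
    by move=> j; lia.
  by move=> j; apply: tm_pm.
have H3 := @cv_mul _ _ _ _ _ (@cv_shift _ _ _ HL) H2; rewrite mulr1 in H3.
apply: (@cv_ext _ _ _ _ _ H3) => j; by rewrite G_even G_pair.
Qed.

Lemma h_cv (x : C) : not_negint x -> exists L, L != 0 /\ cv (G x) L /\ h x = L.
Proof.
move=> hx; have [L [L0 HL]] := G_cv x hx; exists L; split => //; split => //.
have E : fpart (x / 2) ((x + 1) / 2) = G x by apply: funext => N; apply: fpart_h.
by rewrite /h /f E; apply: cv_lim.
Qed.
End S5.

Theorem lemma3 (R : realType) (b c : R[i]) (hb : not_negint b) (hc : not_negint c) :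
  f b c = (c + 1) / (b + 1) * (h b / h c).
Proof.
have [Lb [Lb0 [Hb hbE]]] := h_cv b hb.
have [Lc [Lc0 [Hc hcE]]] := h_cv c hc.
rewrite hbE hcE /f; apply: cv_lim.
have Hodd : cv (fun M => fpart b c M.*2.+1) ((c + 1) / (b + 1) * (Lb / Lc)).
  apply: (@cv_ext _ (fun M => (c + 1) / (b + 1) * (G b M / G c M))).
    by move=> M; rewrite fpart_odd.
  apply: (@cv_mul _ (fun _ => (c + 1) / (b + 1))); first exact: cv_cst.
  apply: (@cv_mul _ (G b)) => //; exact: (@cv_inv _ (G c)).
apply: (@cv_evenodd _ (fpart b c)) => //.
have H2 : cv (fun M => Fb b c M.*2.+2) 1.
  rewrite /Fb; apply: (ratio_cv b c (fun M => M.*2.+2) (fun M => tm M.*2.+2)).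
    by move=> j; lia.
  by move=> j; apply: tm_pm.
have H3 := @cv_mul _ _ _ _ _ Hodd H2; rewrite mulr1 in H3.
apply: (@cv_ext _ _ _ _ _ H3) => M; by rewrite fpart_even.
Qed.
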